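(* $\mathfrak{ss}_n=3$.
   Context: Let $\mathfrak S_{cc}$ be the set of all sequences $\mathbf a=\langle a_i:i\in\omega\rangle$ of rational numbers with $a_i\to0$ such that $\sum_i a_i$ is conditionally convergent, i.e. converges to a real number and is conditional. A series $\sum\mathbf b$ is conditional if the sum of its positive terms is $+\infty$ and the sum of its negative terms is $-\infty$. Let $[\omega]^\omega_\omega$ be the set of infinite coinfinite subsets of $\omega$; for such $X$ with increasing enumeration $\langle i_n\rangle$, $\sum_X\mathbf a$ denotes $\sum_n a_{i_n}$. $\mathfrak{ss}_n$ is the least cardinality of a family $\mathcal X\subseteq[\omega]^\omega_\omega$ such that for every $\mathbf a\in\mathfrak S_{cc}$ there is $X\in\mathcal X$ with $\sum_X\mathbf a$ conditional. *)

(* Defs.v *)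
From HB Require Import structures.
From mathcomp Require Import all_boot all_order all_algebra.
From mathcomp Require Import all_classical all_reals all_analysis.
Set Implicit Arguments. Unset Strict Implicit. Unset Printing Implicit Defensive.
Import Order.TTheory GRing.Theory Num.Theory.
Import numFieldNormedType.Exports.
Local Open Scope classical_set_scope.
Local Open Scope ring_scope.

Definition conditional_series (R : realType) (b : nat -> R) : Prop :=
  (series (fun n => Num.max (b n) 0) @ \oo --> +oo) /\
  (series (fun n => Num.min (b n) 0) @ \oo --> -oo).

Definition inf_coinf : set (set nat) :=
  [set X | infinite_set X /\ infinite_set (~` X)].

(* least element of X that is >= k (X assumed infinite) *)
Definition next_in (X : set nat) (k : nat) : nat :=
  xget 0%N [set m | X m /\ (k <= m)%N /\ forall j, X j -> (k <= j)%N -> (m <= j)%N].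

Fixpoint enum_set (X : set nat) (n : nat) : nat :=
  match n with
  | 0 => next_in X 0
  | n'.+1 => next_in X (enum_set X n').+1
  end.

Definition subseq_on (T : Type) (X : set nat) (a : nat -> T) : nat -> T :=
  fun n => a (enum_set X n).

Definition S_cc (R : realType) : set (nat -> rat) :=
  [set a | (fun n => ratr (a n) : R) @ \oo --> 0 /\
           cvg (series (fun n => ratr (a n) : R) @ \oo) /\
           conditional_series (fun n => ratr (a n) : R)].

(* F witnesses the defining property of ss_n *)
Definition ss_family (R : realType) (F : set (set nat)) : Prop :=
  F `<=` inf_coinf /\
  forall a, S_cc R a ->
    exists2 X, F X & conditional_series (subseq_on X (fun n => ratr (a n) : R)).

(* Main.v *)
Require Import Defs.
From HB Require Import structures.
From mathcomp Require Import all_boot all_order all_algebra.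
From mathcomp Require Import all_classical all_reals all_analysis.
Set Implicit Arguments. Unset Strict Implicit. Unset Printing Implicit Defensive.
Import Order.TTheory GRing.Theory Num.Theory.
Import numFieldNormedType.Exports.
Local Open Scope classical_set_scope.
Local Open Scope ring_scope.
Local Open Scope card_scope.

Lemma inf_unbounded (X : set nat) : infinite_set X ->
  forall k, exists m, X m /\ (k <= m)%N.
Proof.
move=> Xinf k; apply: contrapT => H; apply: Xinf.
apply: (@sub_finite_set _ _ `I_k); last exact: finite_II.
move=> m Xm /=; rewrite ltnNge; apply/negP => km; apply: H; by exists m.
Qed.

Lemma unbounded_inf (X : set nat) (f : nat -> nat) :
  injective f -> (forall n, X (f n)) -> infinite_set X.
Proof.
move=> fI fX; apply: (@sub_infinite_set _ (f @` setT)).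
  by move=> _ [n _ <-].
move=> /finite_setP [n]; rewrite (card_eq_sym) => H.
have : f @` setT #= [set: nat] by apply: inj_card_eq => x y _ _; apply: fI.
move=> H2; apply: infinite_nat; apply/finite_setP; exists n.
by rewrite card_eq_sym in H2; apply: card_eq_trans H2 _; rewrite card_eq_sym.
Qed.

Lemma next_inP (X : set nat) k : infinite_set X ->
  [/\ X (next_in X k), (k <= next_in X k)%N &
     forall j, X j -> (k <= j)%N -> (next_in X k <= j)%N].
Proof.
move=> Xinf; rewrite /next_in.
have ex : exists n, (fun m => `[< X m /\ (k <= m)%N >]) n.
  have [m [Xm km]] := inf_unbounded Xinf k. by exists m; apply/asboolP.
case: (ex_minnP ex) => m /asboolP [Xm km] mmin.
have P : [set m | X m /\ (k <= m)%N /\ forall j, X j -> (k <= j)%N -> (m <= j)%N] m.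
  split => //; split => // j Xj kj; apply: mmin; exact/asboolP.
by have [? [? ?]] := xgetPex 0%N (ex_intro _ m P).
Qed.

Lemma enum_setE (X : set nat) n :
  enum_set X n = next_in X (if n is n'.+1 then (enum_set X n').+1 else 0%N).
Proof. by case: n. Qed.

Lemma cvgy_seqP (R : realType) (u : nat -> R) :
  u @ \oo --> +oo <-> forall A, exists N, forall n, (N <= n)%N -> A <= u n.
Proof.
rewrite cvgryPge; split => H A.
  have [N _ HN] := H A. by exists N => n Nn; apply: HN.
have [N HN] := H A. by exists N.
Qed.

Lemma cvgNy_seqP (R : realType) (u : nat -> R) :
  u @ \oo --> -oo <-> forall A, exists N, forall n, (N <= n)%N -> u n <= A.
Proof.
rewrite cvgrNyPle; split => H A.
  have [N _ HN] := H A. by exists N => n Nn; apply: HN.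
have [N HN] := H A. by exists N.
Qed.

Lemma cvg0_seq (R : realType) (u : nat -> R) :
  (forall e, 0 < e -> exists N, forall n, (N <= n)%N -> `|u n| <= e) -> u @ \oo --> 0.
Proof.
move=> H; apply/cvgrPdist_le => e e0.
have [N HN] := H e e0. exists N => // n /= Nn. by rewrite sub0r normrN HN.
Qed.

Lemma sub_nonpos (R : realType) (Z : set nat) (b : nat -> R) : infinite_set Z ->
  (forall i, Z i -> b i <= 0) -> ~ conditional_series (subseq_on Z b).
Proof.
move=> Zi Hb [/cvgy_seqP H _]; have [N HN] := H 1.
have := HN N (leqnn N); rewrite /series /= big1 ?ler10 // => i _.
rewrite /subseq_on; have [Zn _ _] := next_inP (if i is n'.+1 then (enum_set Z n').+1 else 0%N) Zi.
by rewrite enum_setE; apply/max_idPr; apply: Hb.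
Qed.

Lemma sub_nonneg (R : realType) (Z : set nat) (b : nat -> R) : infinite_set Z ->
  (forall i, Z i -> 0 <= b i) -> ~ conditional_series (subseq_on Z b).
Proof.
move=> Zi Hb [_ /cvgNy_seqP H]; have [N HN] := H (-1).
have := HN N (leqnn N); rewrite /series /= big1 ?ler0N1 // => i _.
rewrite /subseq_on; have [Zn _ _] := next_inP (if i is n'.+1 then (enum_set Z n').+1 else 0%N) Zi.
by rewrite enum_setE; apply/min_idPr; apply: Hb.
Qed.
Fixpoint st (X Y : set nat) (i : nat) : nat * bool :=
  if i is i'.+1 then
    let p := st X Y i' in
    if p.2 then (if `[< ~ X i' >] then (p.1, false) else p)
    else (if `[< ~ Y i' >] then (p.1.+1, true) else p)
  else (0%N, true).

Definition sR (R : realType) X Y i : R :=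
  if (st X Y i).2 then 0 else ((st X Y i).1.+1%:R)^-1.
Definition sQ X Y i : rat :=
  if (st X Y i).2 then 0 else ((st X Y i).1.+1%:R)^-1.
Definition aQ X Y i : rat := sQ X Y i.+1 - sQ X Y i.

Section Constr.
Variables (R : realType) (X Y : set nat).
Hypotheses (HX : infinite_set (~` X)) (HY : infinite_set (~` Y)).

Lemma ratr_sQ i : ratr (sQ X Y i) = sR R X Y i.
Proof. by rewrite /sQ /sR; case: (st X Y i) => k [] /=; rewrite ?rmorph0 // fmorphV rmorph_nat. Qed.

Lemma ratr_aQ i : ratr (aQ X Y i) = sR R X Y i.+1 - sR R X Y i.
Proof. by rewrite /aQ -!ratr_sQ rmorphB. Qed.

Lemma st_flip1 k d : forall i, st X Y i = (k, true) -> ~ X (i + d)%N ->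
  exists j, st X Y j = (k, false).
Proof.
elim: d => [|d IH] i Hi Hd.
  by rewrite addn0 in Hd; exists i.+1 => /=; rewrite Hi /=; case: asboolP.
have [Xi|nXi] := pselect (X i).
  apply: (IH i.+1) => /=; first by rewrite Hi /=; case: asboolP.
  by rewrite addSnnS.
by exists i.+1 => /=; rewrite Hi /=; case: asboolP.
Qed.

Lemma st_flip2 k d : forall i, st X Y i = (k, false) -> ~ Y (i + d)%N ->
  exists j, st X Y j = (k.+1, true).
Proof.
elim: d => [|d IH] i Hi Hd.
  by rewrite addn0 in Hd; exists i.+1 => /=; rewrite Hi /=; case: asboolP.
have [Yi|nYi] := pselect (Y i).
  apply: (IH i.+1) => /=; first by rewrite Hi /=; case: asboolP.
  by rewrite addSnnS.
by exists i.+1 => /=; rewrite Hi /=; case: asboolP.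
Qed.

Lemma st_reach K : exists i, st X Y i = (K, true).
Proof.
elim: K => [|K [i Hi]]; first by exists 0%N.
have [m [nXm im]] := inf_unbounded HX i.
have [j Hj] : exists j, st X Y j = (K, false).
  by apply: (st_flip1 (d := (m - i)%N) Hi); rewrite subnKC.
have [m' [nYm jm]] := inf_unbounded HY j.
by apply: (st_flip2 (d := (m' - j)%N) Hj); rewrite subnKC.
Qed.

Lemma st_step i : ((st X Y i).1 <= (st X Y i.+1).1)%N.
Proof.
by rewrite /=; case: (st X Y i) => k [] /=; case: asboolP.
Qed.

Lemma st_mono i j : (i <= j)%N -> ((st X Y i).1 <= (st X Y j).1)%N.
Proof.
move=> /subnKC <-; elim: (j - i)%N => [|d IH]; first by rewrite addn0.
by rewrite addnS (leq_trans IH (st_step _)).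
Qed.

Lemma st_large K : exists N, forall n, (N <= n)%N -> (K <= (st X Y n).1)%N.
Proof.
have [i Hi] := st_reach K; exists i => n /st_mono; by rewrite Hi.
Qed.

Lemma sR_ge0 i : 0 <= sR R X Y i.
Proof. by rewrite /sR; case: (st X Y i) => k [] //=; rewrite invr_ge0. Qed.

Lemma sR_le i : sR R X Y i <= ((st X Y i).1.+1%:R)^-1.
Proof. by rewrite /sR; case: (st X Y i) => k [] //=; rewrite invr_ge0. Qed.

Lemma aX i : X i -> sR R X Y i.+1 - sR R X Y i <= 0.
Proof.
move=> Xi; rewrite subr_le0 /sR /=; case: (st X Y i) => k [] /=.
  by case: asboolP.
case: asboolP => //= _; by rewrite invr_ge0.
Qed.

Lemma aY i : Y i -> 0 <= sR R X Y i.+1 - sR R X Y i.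
Proof.
move=> Yi; rewrite subr_ge0 /sR /=; case: (st X Y i) => k [] /=.
  case: asboolP => //= _; by rewrite invr_ge0.
by case: asboolP.
Qed.

End Constr.
Section Ser.
Variables (R : realType) (X Y : set nat).

Let s := sR R X Y.
Let k n := (st X Y n).1.

Lemma U_eq n : series (fun i => Num.max (s i.+1 - s i) 0) n = series (@harmonic R) (k n) + s n.
Proof.
elim: n => [|n IH]; first by rewrite /series /= !big_geq // /s /sR /= addr0.
rewrite seriesS IH /k /s /sR /=; case: (st X Y n) => kk [] /=; case: asboolP => _ /=.
all: have hp : 0 <= kk.+1%:R^-1 :> R by rewrite invr_ge0.
all: rewrite ?seriesS /= ?subr0 ?subrr ?sub0r ?addr0 ?maxxx ?add0r //.
- by rewrite (max_idPl hp) addrC.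
- by rewrite (max_idPr _) ?oppr_le0 // add0r addrC.
Qed.

Lemma D_eq n : series (fun i => Num.min (s i.+1 - s i) 0) n = - series (@harmonic R) (k n).
Proof.
elim: n => [|n IH]; first by rewrite /series /= !big_geq // oppr0.
rewrite seriesS IH /k /s /sR /=; case: (st X Y n) => kk [] /=; case: asboolP => _ /=.
all: have hp : 0 <= kk.+1%:R^-1 :> R by rewrite invr_ge0.
all: rewrite ?seriesS /= ?subr0 ?subrr ?sub0r ?addr0 ?minxx ?add0r //.
- by rewrite (min_idPr hp) add0r.
- by rewrite (min_idPl _) ?oppr_le0 // opprD.
Qed.
End Ser.

Lemma ser_mono (R : realType) (u : nat -> R) : (forall n, 0 <= u n) ->
  forall m n, (m <= n)%N -> series u m <= series u n.
Proof.
move=> u0 m n mn.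
have := @nondecreasing_series R u predT 0%N (fun n _ _ => u0 n) m n mn.
by rewrite /series /=.
Qed.

Lemma H_inf (R : realType) : series (@harmonic R) @ \oo --> +oo.
Proof.
apply: nondecreasing_dvgn_lt; last exact: dvg_harmonic.
by move=> m n mn; apply: ser_mono => // i; exact: harmonic_ge0.
Qed.

Lemma counter (R : realType) (X Y : set nat) :
  infinite_set (~` X) -> infinite_set (~` Y) ->
  exists a, S_cc R a /\ (forall i, X i -> ratr (a i) <= 0 :> R) /\
    (forall i, Y i -> 0 <= ratr (a i) :> R).
Proof.
move=> HX HY; exists (aQ X Y).
set s := sR R X Y.
have ra : (fun n => ratr (aQ X Y n) : R) = (fun n => s n.+1 - s n).
  by apply: funext => n; rewrite ratr_aQ.
split; last first.
  by split => i Hi; rewrite ratr_aQ; [apply: aX | apply: aY].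
have s0 : s @ \oo --> 0.
  apply: cvg0_seq => e e0.
  have /cvgrPdist_le /(_ e e0) [K _ HK] := @cvg_harmonic R.
  have [N HN] := st_large HX HY K.
  exists N => n Nn; rewrite ger0_norm; last exact: sR_ge0.
  apply: (le_trans (sR_le _ _ _ _)); apply: le_trans (_ : harmonic K <= e).
    rewrite /= lef_pV2 ?posrE ?ltr0Sn // ler_nat ltnS; exact: HN.
  by have := HK K (leqnn K); rewrite /= sub0r normrN ger0_norm // invr_ge0.
have Hk : forall A, exists N, forall n, (N <= n)%N -> A <= series (@harmonic R) (st X Y n).1.
  move=> A; have /cvgy_seqP /(_ A) [K HK] := @H_inf R.
  have [N HN] := st_large HX HY K.
  by exists N => n /HN /HK.
rewrite /S_cc /conditional_series /= ra; split.
  have s1 : (fun n => s n.+1) @ \oo --> 0 by rewrite (cvg_shiftS s).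
  by have := cvgB s1 s0; rewrite subr0; apply.
split.
  have -> : series (fun n => s n.+1 - s n) = s.
    apply: funext => n; elim: n => [|n IH]; first by rewrite /series /= big_geq // /s /sR.
    by rewrite seriesS IH subrK.
  by apply/cvg_ex; exists 0.
split.
  have -> : (fun n => Num.max (ratr (aQ X Y n)) 0) = fun n => Num.max (s n.+1 - s n) 0.
    by apply: funext => n; rewrite ratr_aQ.
  apply/cvgy_seqP => A; have [N HN] := Hk A; exists N => n /HN HA.
  rewrite U_eq; apply: (le_trans HA); rewrite lerDl; exact: sR_ge0.
have -> : (fun n => Num.min (ratr (aQ X Y n)) 0) = fun n => Num.min (s n.+1 - s n) 0.
  by apply: funext => n; rewrite ratr_aQ.
apply/cvgNy_seqP => A; have [N HN] := Hk (- A); exists N => n /HN HA.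
by rewrite D_eq lerNl.
Qed.

Definition rg (R : realType) (Z : set nat) (g : nat -> R) i : R := if `[< Z i >] then g i else 0.

Section Up.
Variable R : realType.
Implicit Types (g : nat -> R) (Z : set nat).

Lemma rg_ge0 Z g : (forall i, 0 <= g i) -> forall i, 0 <= rg Z g i.
Proof. by move=> g0 i; rewrite /rg; case: asboolP. Qed.

Lemma T_next Z g k : infinite_set Z ->
  series (rg Z g) (next_in Z k) = series (rg Z g) k.
Proof.
move=> Zi; have [_ kn nmin] := next_inP k Zi.
suff H : forall d, (k + d <= next_in Z k)%N -> series (rg Z g) (k + d)%N = series (rg Z g) k.
  by rewrite -(subnKC kn) H // subnKC.
elim => [|d IH] Hd; first by rewrite addn0.
rewrite addnS seriesS IH; last by rewrite (leq_trans _ Hd) // leq_add2l.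
rewrite /rg; case: asboolP => [Zd|_]; last by rewrite add0r.
have := nmin _ Zd (leq_addr _ _); rewrite addnS in Hd.
by move=> H; have := leq_trans Hd H; rewrite ltnn.
Qed.

Lemma subser_inf Z g : infinite_set Z -> (forall i, 0 <= g i) ->
  series (rg Z g) @ \oo --> +oo -> series (subseq_on Z g) @ \oo --> +oo.
Proof.
move=> Zi g0 /cvgy_seqP H; apply/cvgy_seqP => A.
pose E N := if N is N'.+1 then (enum_set Z N').+1 else 0%N.
have eq : forall N, series (subseq_on Z g) N = series (rg Z g) (E N).
  elim => [|N IH]; first by rewrite /series /= !big_geq.
  rewrite seriesS IH /E seriesS -/(E N).
  have [Ze _ _] := next_inP (E N) Zi.
  rewrite /subseq_on enum_setE -/(E N) T_next //.
  by rewrite /rg; case: asboolP.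
have EN : forall N, (N <= E N)%N.
  elim => [|N IH] //=; rewrite enum_setE -/(E N) ltnS.
  have [_ h _] := next_inP (E N) Zi; exact: leq_trans IH h.
have [M HM] := H A; exists M => N MN; rewrite eq; apply: HM.
exact: leq_trans MN (EN N).
Qed.

Lemma bnd (u : nat -> R) : {homo u : m n / (m <= n)%N >-> m <= n} ->
  ~ (u @ \oo --> +oo) -> exists B, forall n, u n <= B.
Proof.
move=> um nu; apply: contrapT => nB; apply: nu; apply/cvgy_seqP => A.
have [n Hn] : exists n, A < u n.
  apply: contrapT => h; apply: nB; exists A => n; rewrite leNgt; apply/negP => h'.
  by apply: h; exists n.
by exists n => m nm; rewrite (le_trans (ltW Hn)) // um.
Qed.

Lemma split3 g : (forall i, 0 <= g i) -> series g @ \oo --> +oo ->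
  exists2 r, (r < 3)%N & series (rg [set i | (i %% 3 == r)%N] g) @ \oo --> +oo.
Proof.
move=> g0 Hg; apply: contrapT => nr.
have hb : forall r, (r < 3)%N -> exists B, forall n, series (rg [set i | (i %% 3 == r)%N] g) n <= B.
  move=> r r3; apply: bnd; first by move=> m n; apply: ser_mono; exact: rg_ge0.
  by move=> h; apply: nr; exists r.
have [B0 H0] := hb 0%N erefl; have [B1 H1] := hb 1%N erefl; have [B2 H2] := hb 2%N erefl.
have /cvgy_seqP /(_ (B0 + B1 + B2 + 1)) [N HN] := Hg.
have := HN N (leqnn N).
have -> : series g N = series (rg [set i | (i %% 3 == 0)%N] g) N +
   series (rg [set i | (i %% 3 == 1)%N] g) N + series (rg [set i | (i %% 3 == 2)%N] g) N.
  rewrite /series /= -!big_split /=; apply: eq_bigr => i _.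
  rewrite /rg /= !asboolb; have : (i %% 3 < 3)%N by rewrite ltn_mod.
  by move: (i %% 3)%N => m; case: m => [|[|[|//]]] _ /=; rewrite ?addr0 ?add0r.
move=> h; have := le_trans h (lerD (lerD (H0 N) (H1 N)) (H2 N)).
by rewrite gerDl ler10.
Qed.

Lemma mono_set Z W g : Z `<=` W -> (forall i, 0 <= g i) ->
  series (rg Z g) @ \oo --> +oo -> series (rg W g) @ \oo --> +oo.
Proof.
move=> ZW g0 /cvgy_seqP H; apply/cvgy_seqP => A; have [N HN] := H A.
exists N => n /HN h; apply: (le_trans h); rewrite /series /=; apply: ler_sum => i _.
rewrite /rg; case: asboolP => [/ZW Wi|_]; case: asboolP => //.
Qed.
End Up.
Definition Xr (r : nat) : set nat := [set i | (i %% 3 != r)%N].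

Lemma Xr_inf r : (r < 3)%N -> inf_coinf (Xr r).
Proof.
move=> r3; split.
  apply: (@unbounded_inf _ (fun n => n * 3 + (if r == 0 then 1 else 0))%N).
    by move=> n m /= /addIn /eqP; rewrite eqn_mul2r /= => /eqP.
  move=> n; rewrite /Xr /= modnMDl modn_small; last by case: (r == 0%N).
  by case: r r3 => [|r] //= _; case: r.
apply: (@unbounded_inf _ (fun n => n * 3 + r)%N).
  by move=> n m /= /addIn /eqP; rewrite eqn_mul2r /= => /eqP.
by move=> n; rewrite /Xr /= modnMDl modn_small // eqxx.
Qed.

Lemma upper (R : realType) : ss_family R ((fun r => Xr r) @` `I_3).
Proof.
split; first by move=> _ [r r3 <-]; exact: Xr_inf.
move=> a [_ [_ [Hp Hn]]]; set b := fun n => ratr (a n) : R.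
have g0 : forall i, 0 <= Num.max (b i) 0 by move=> i; rewrite le_max lexx orbT.
have g0' : forall i, 0 <= - Num.min (b i) 0 by move=> i; rewrite oppr_ge0 ge_min lexx orbT.
have Hn' : series (fun n => - Num.min (b n) 0) @ \oo --> +oo.
  apply/cvgy_seqP => A; move/cvgNy_seqP: Hn => /(_ (- A)) [N HN]; exists N => n /HN.
  by rewrite /series /= sumrN lerNr.
have [p p3 Pp] := split3 g0 Hp.
have [q q3 Pq] := split3 g0' Hn'.
have [r [r3 pr qr]] : exists r, [/\ (r < 3)%N, p != r & q != r].
  exists (if (p != 0) && (q != 0) then 0%N else if (p != 1) && (q != 1) then 1%N else 2%N).
  by move: p3 q3; case: p {Pp} => [|[|[|p]]] // _; case: q {Pq} => [|[|[|q]]].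
have [Xinf _] := Xr_inf r3.
have subX : forall s, s != r -> [set i | (i %% 3 == s)%N] `<=` Xr r.
  by move=> s sr i /= /eqP E; rewrite /Xr /= E.
exists (Xr r); first by exists r.
split.
  exact: (subser_inf Xinf g0 (mono_set (subX p pr) g0 Pp)).
have := subser_inf Xinf g0' (mono_set (subX q qr) g0' Pq).
move=> /cvgy_seqP H; apply/cvgNy_seqP => A; have [N HN] := H (- A).
exists N => n /HN; by rewrite /series /= sumrN lerNr opprK.
Qed.

Lemma lower (R : realType) (F : set (set nat)) : ss_family R F -> (`I_3 #<= F).
Proof.
move=> [Fsub HF]; apply: contrapT => nle.
have [X [Y [hX [hY hF]]]] : exists X Y, infinite_set (~` X) /\ infinite_set (~` Y) /\
    forall Z, F Z -> Z = X \/ Z = Y.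
  have [[X FX]|nF] := pselect (exists X, F X); last first.
    exists set0, set0; rewrite setC0; split; first exact: infinite_nat.
    split; first exact: infinite_nat.
    by move=> Z FZ; exfalso; apply: nF; exists Z.
  have [[Y [FY YX]]|nY] := pselect (exists Y, F Y /\ Y <> X); last first.
    exists X, X; split; first exact: (Fsub X FX).2.
    split; first exact: (Fsub X FX).2.
    move=> Z FZ; left; apply: contrapT => ZX; apply: nY; by exists Z.
  exists X, Y; split; first exact: (Fsub X FX).2.
  split; first exact: (Fsub Y FY).2.
  move=> Z FZ; apply: contrapT => /not_orP [ZX ZY]; apply: nle.
  pose f n := if n == 0%N then X else if n == 1%N then Y else Z.
  have : f @` `I_3 #= `I_3.
    apply: inj_card_eq => m n /set_mem /= m3 /set_mem /= n3.
    move: m3 n3; rewrite /f.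
    case: m => [|[|[|m]]] //; case: n => [|[|[|n]]] //= _ _ E; exfalso; first [ by apply: YX; rewrite E | by apply: YX; rewrite -E
      | by apply: ZX; rewrite E | by apply: ZX; rewrite -E
      | by apply: ZY; rewrite E | by apply: ZY; rewrite -E ].
  rewrite card_eq_le => /andP [_ le1].
  apply: (card_le_trans le1); apply: subset_card_le.
  move=> _ [n n3 <-]; rewrite /f; case: (n == 0%N) => //; by case: (n == 1%N).
have [a [Sa [aX aY]]] := counter R hX hY.
have [Z FZ cZ] := HF a Sa.
have Zinf := (Fsub Z FZ).1.
by case: (hF Z FZ) => EZ; subst Z; [apply: (sub_nonpos Zinf aX cZ) | apply: (sub_nonneg Zinf aY cZ)].
Qed.

Close Scope ring_scope.
Close Scope card_scope.
Unset Implicit Arguments.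

Theorem mainTheorem14 (R : realType) :
  (exists F : set (set nat), ss_family R F /\ (F #= `I_3)%card) /\
  (forall F : set (set nat), ss_family R F -> (`I_3 #<= F)%card).
Proof.
split; last exact: lower.
exists ((fun r => Xr r) @` `I_3); split; first exact: upper.
apply: inj_card_eq => m n /set_mem /= m3 /set_mem /= n3 E.
have : ~ Xr n m by rewrite -E /Xr /= modn_small // eqxx.
by rewrite /Xr /= modn_small // => /negP; rewrite negbK => /eqP.
Qed.
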